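(* For any integer $g\ge 0$, \[\sum_{S\in\mathcal{B}(g)}t_2(S)\le F_{g+4},\] where $F_n$ is the $n$-th Fibonacci number ($F_1=F_2=1$, $F_{n+2}=F_{n+1}+F_n$).
   Context: A numerical semigroup $S$ is a submonoid of $\mathbb{N}_0$ with finite complement $\mathcal{H}(S)$; its genus is $|\mathcal{H}(S)|$, $m=m(S)$ its smallest nonzero element and $F=F(S)=\max\mathcal{H}(S)$. The type $t(S)$ is the number of $P\in\mathcal{H}(S)$ with $P+s\in S$ for all $s\in S\setminus\{0\}$. Define $t_1(S)=\#(\mathcal{H}(S)\cap[F-m+1,F])$ and $t_2(S)=t(S)-t_1(S)$. $\mathcal{B}(g)$ is the set of numerical semigroups $S$ of genus $g$ with $F(S)<2m(S)$. *)

(* Defs.v *)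
(* A numerical semigroup S is represented by its gap set
   H(S) = N \ S, given as a strictly increasing list of naturals
   (canonical representation: two such lists are equal iff the
   semigroups are equal). S itself is the predicate (fun n => n \notin H). *)
From mathcomp Require Import all_boot.
Set Implicit Arguments. Unset Strict Implicit. Unset Printing Implicit Defensive.

(* H is the gap set of a numerical semigroup: S := N \ H contains 0
   and is closed under addition (finiteness of H is automatic). *)
Definition is_gapset (H : seq nat) : Prop :=
  [/\ sorted ltn H, 0 \notin H &
      forall a b, a \notin H -> b \notin H -> a + b \notin H].

Definition genus (H : seq nat) : nat := size H.

(* Frobenius number F(S) = max H(S) (only used when H is nonempty;
   for H empty, i.e. S = N, F = -1 by convention, see in_B). *)
Definition frob (H : seq nat) : nat := \max_(h <- H) h.

(* multiplicity m(S): smallest nonzero element of S.  It is at most F+1,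
   so searching in [0, F+1] suffices (index in iota 0 _ = value). *)
Definition mult (H : seq nat) : nat :=
  find (fun n => (0 < n) && (n \notin H)) (iota 0 (frob H).+2).

(* P in H(S) is pseudo-Frobenius iff P + s \in S for all s \in S \ {0}.
   For s > F we have P + s > F, hence P + s \in S automatically, so it
   suffices to check 1 <= s <= F. *)
Definition pseudo_frob (H : seq nat) (P : nat) : bool :=
  (P \in H) && all (fun s => (s \in H) || (P + s \notin H)) (iota 1 (frob H)).

Definition type_ns (H : seq nat) : nat := count (pseudo_frob H) H.

(* t_1(S) = #(H(S) \cap [F - m + 1, F]);  note m <= F + 1 so F + 1 - m is
   exact. *)
Definition t1 (H : seq nat) : nat :=
  count (fun h => (frob H + 1 - mult H <= h) && (h <= frob H)) H.

(* t_2(S) = t(S) - t_1(S)  (t_1 <= t always, so truncation is harmless) *)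
Definition t2 (H : seq nat) : nat := type_ns H - t1 H.

(* S \in B(g): genus g and F(S) < 2 m(S) (vacuous when S = N, F = -1). *)
Definition in_B (g : nat) (H : seq nat) : Prop :=
  [/\ is_gapset H, genus H = g & (H = [::] \/ frob H < 2 * mult H)].

Fixpoint fib (n : nat) : nat :=
  match n with
  | 0 => 0
  | 1 => 1
  | (m.+1 as k).+1 => fib k + fib m
  end.

(* Main.v *)
Require Import Defs.
From mathcomp Require Import all_boot zify.
Set Implicit Arguments. Unset Strict Implicit. Unset Printing Implicit Defensive.

Definition wt (s : seq bool) : nat := size s + count negb s.

Lemma map_iota_eq (A : Type) (f g : nat -> A) a n n' :
  [seq f i | i <- iota a n] = [seq g i | i <- iota a n'] ->
  n = n' /\ forall i, a <= i < a + n -> f i = g i.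
Proof.
move=> E; have := congr1 size E; rewrite !size_map !size_iota => Hn.
split=> // i Hi.
have := congr1 (nth (f 0) ^~ (i - a)) E.
rewrite (nth_map 0) ?size_iota; last lia.
rewrite (nth_map 0) ?size_iota; last lia.
rewrite !nth_iota; try lia.
by rewrite subnKC //; lia.
Qed.

Definition zp (x : nat -> bool) P r := [seq (x b, x (b + P)) | b <- iota 1 r.-1].
Definition fl (ps : seq (bool * bool)) := flatten [seq [:: p.1; p.2] | p <- ps].

Lemma fl_dec ps1 ps2 r1 r2 : (true, false) \notin ps1 -> (true, false) \notin ps2 ->
  fl ps1 ++ true :: false :: r1 = fl ps2 ++ true :: false :: r2 -> ps1 = ps2 /\ r1 = r2.
Proof.
elim: ps1 ps2 => [|[a b] ps1 IH] [|[c d] ps2] //=.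
- by move=> _ _ [].
- rewrite inE negb_or => _ /andP [H _] [ec ed]; subst c d; by rewrite eqxx in H.
- rewrite inE negb_or => /andP [H _] _ [ec ed]; subst a b; by rewrite eqxx in H.
- rewrite !inE !negb_or => /andP [_ H1] /andP [_ H2] [-> -> E].
  by have [-> ->] := IH _ H1 H2 E.
Qed.

Definition core (x : nat -> bool) P k :=
  let l := k.+1 - P in
  if l < P then [:: false; true] ++ fl (zp x P l) ++ true :: false :: [seq x i | i <- iota l.+1 (P - l.+1)]
  else [:: true] ++ fl (zp x P P) ++ true :: false :: [seq x i | i <- iota (P + P) (k.+1 - (P + P))].

Definition valid (x : nat -> bool) P k :=
  [/\ 0 < P, P <= k, x P = true, x (k.+1 - P) = false &
      forall b, 1 <= b -> b + P <= k -> x b -> x (b + P)].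

Lemma zp_ok x P k r : valid x P k -> r.-1 + P <= k -> (true, false) \notin zp x P r.
Proof.
case=> _ _ _ _ D Hr; apply/mapP=> -[b]; rewrite mem_iota => Hb [E1 E2].
have H1 : 1 <= b by lia.
have H2 : b + P <= k by lia.
by have := D b H1 H2; rewrite -E1 -E2 => /(_ isT).
Qed.

Lemma core_inj x1 P1 k1 x2 P2 k2 : valid x1 P1 k1 -> valid x2 P2 k2 ->
  core x1 P1 k1 = core x2 P2 k2 ->
  [/\ P1 = P2, k1 = k2 & forall i, 1 <= i <= k1 -> x1 i = x2 i].
Proof.
move=> V1 V2; have V1' := V1; have V2' := V2.
case: V1' => p1 pk1 xp1 xl1 _; case: V2' => p2 pk2 xp2 xl2 _.
have lP1 : k1.+1 - P1 != P1 by apply/eqP=> E; move: xl1; rewrite E xp1.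
have lP2 : k2.+1 - P2 != P2 by apply/eqP=> E; move: xl2; rewrite E xp2.
rewrite /core.
case: ifP => c1; case: ifP => c2 //=.
- move=> [] /fl_dec [].
  + apply: (zp_ok V1); lia.
  + apply: (zp_ok V2); lia.
  move=> /map_iota_eq [e1 h1] E2.
  have el : k2.+1 - P2 = k1.+1 - P1 by lia.
  rewrite el in E2; have [e2 h2] := map_iota_eq E2.
  have eP : P1 = P2 by lia.
  have ek : k1 = k2 by lia.
  subst P2 k2; split=> // i Hi.
  set l := k1.+1 - P1 in c1 c2 e1 e2 h1 h2 xl1 xl2 lP1 lP2.
  have [ii|ii] := ltnP i l.
    have E : (x1 i, x1 (i + P1)) = (x2 i, x2 (i + P1)) by apply: h1; lia.
    by case: E.
  have [ie|ie] := eqVneq i l; first by subst i; rewrite xl1 xl2.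
  have [ij|ij] := ltnP i P1.
    by apply: h2; lia.
  have [ie2|ie2] := eqVneq i P1; first by subst i; rewrite xp1 xp2.
  have E : (x1 (i - P1), x1 (i - P1 + P1)) = (x2 (i - P1), x2 (i - P1 + P1)) by apply: h1; lia.
  by move: E; rewrite subnK; [case | lia].
- move=> [] /fl_dec [].
  + apply: (zp_ok V1); lia.
  + apply: (zp_ok V2); lia.
  move=> /map_iota_eq [e1 h1] E2.
  have eP : P1 = P2 by lia.
  subst P2; have [e2 h2] := map_iota_eq E2.
  have ek : k1 = k2 by lia.
  subst k2; split=> // i Hi.
  have [ii|ii] := ltnP i P1.
    have E : (x1 i, x1 (i + P1)) = (x2 i, x2 (i + P1)) by apply: h1; lia.
    by case: E.
  have [ie2|ie2] := eqVneq i P1; first by subst i; rewrite xp1 xp2.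
  have [ij|ij] := ltnP i (P1 + P1).
    have E : (x1 (i - P1), x1 (i - P1 + P1)) = (x2 (i - P1), x2 (i - P1 + P1)) by apply: h1; lia.
    by move: E; rewrite subnK; [case | lia].
  by apply: h2; lia.
Qed.


Fixpoint words (N : nat) : seq (seq bool) :=
  match N with
  | 0 => [:: [::]]
  | 1 => [:: [:: true]]
  | (M.+1 as N').+1 => map (cons true) (words N') ++ map (cons false) (words M)
  end.

Lemma fibSS n : fib n.+2 = fib n.+1 + fib n. Proof. by []. Qed.
Lemma wordsSS n : words n.+2 = map (cons true) (words n.+1) ++ map (cons false) (words n).
Proof. by []. Qed.

Lemma size_words N : size (words N) = fib N.+1.
Proof.
elim: N {-2}N (leqnn N) => [|N IH] [|[|M]] // HM.
rewrite wordsSS size_cat !size_map !IH ?(fibSS M.+2) //; lia.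
Qed.

Lemma wt_true s : wt (true :: s) = (wt s).+1.
Proof. by rewrite /wt /= ?addSn ?addnS. Qed.
Lemma wt_false s : wt (false :: s) = (wt s).+2.
Proof. by rewrite /wt /= ?addSn ?addnS. Qed.
Lemma wt_nil : wt [::] = 0. Proof. by []. Qed.

Lemma words_complete s : s \in words (wt s).
Proof.
elim: s => [|b s IH] //.
have cinj : forall c : bool, injective (cons c : seq bool -> seq bool) by move=> c x y [->].
case: b.
- rewrite wt_true.
  case E: (wt s) IH => [|N] IH.
  + by move: E IH; case: s => // -[] s; rewrite ?wt_true ?wt_false.
  + case: N E IH => [|N] E IH.
      by move: E IH; case: s => // -[] s; rewrite ?wt_true ?wt_false.
    by rewrite wordsSS mem_cat (mem_map (cinj _)) IH.
- by rewrite wt_false wordsSS mem_cat orbC (mem_map (cinj _)) IH.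
Qed.

Definition wx (b : bool) := if b then 1 else 2.

Lemma wt_cat s1 s2 : wt (s1 ++ s2) = wt s1 + wt s2.
Proof. rewrite /wt size_cat count_cat; lia. Qed.

Lemma wt_cons b s : wt (b :: s) = wx b + wt s.
Proof. by case: b; rewrite /wt /= ?add0n ?addSn ?addnS. Qed.

Lemma wt_map_iota x a n : wt [seq x i | i <- iota a n] = \sum_(a <= i < a + n) wx (x i).
Proof.
elim: n a => [|n IH] a; first by rewrite addn0 big_geq.
rewrite /= wt_cons IH [RHS]big_ltn; last lia.
by rewrite addSnnS.
Qed.

Lemma wt_fl_map (f g : nat -> bool) s :
  wt (fl [seq (f b, g b) | b <- s]) = wt (map f s) + wt (map g s).
Proof.
elim: s => [|b s IH] //=.
rewrite wt_cat IH !wt_cons /=; rewrite /wt /=; lia.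
Qed.

Lemma wt_zp x P r : 0 < r ->
  wt (fl (zp x P r)) = \sum_(1 <= i < r) wx (x i) + \sum_(P.+1 <= i < r + P) wx (x i).
Proof.
move=> r0; rewrite /zp wt_fl_map wt_map_iota.
have -> : [seq x (b + P) | b <- iota 1 r.-1] = [seq x i | i <- iota P.+1 r.-1].
  have gen : forall a n, [seq x (b + P) | b <- iota a n] = [seq x i | i <- iota (a + P) n].
    by move=> a n; elim: n a => [|n IH] a //=; rewrite IH addSn.
  by rewrite gen add1n.
rewrite wt_map_iota; congr (_ + _); congr (\sum_(_ <= i < _) _); lia.
Qed.

Lemma sum1 (F : nat -> nat) a : \sum_(a <= i < a.+1) F i = F a.
Proof. by rewrite big_nat1. Qed.

Lemma wt_core x P k : valid x P k ->
  wt (core x P k) = \sum_(1 <= i < k.+1) wx (x i) + 3.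
Proof.
case=> p0 pk xp xl D.
rewrite /core /=; move El: (k.+1 - P) => l.
rewrite El in xl.
case: ifP => c.
- rewrite !(wt_cons, wt_cat) wt_zp; last lia.
  rewrite wt_map_iota /=.
  rewrite (big_cat_nat (m := 1) (n := l) (p := k.+1)) /=; [|lia|lia].
  rewrite (big_cat_nat (m := l) (n := l.+1) (p := k.+1)) /=; [|lia|lia].
  rewrite (big_cat_nat (m := l.+1) (n := P) (p := k.+1)) /=; [|lia|lia].
  rewrite (big_cat_nat (m := P) (n := P.+1) (p := k.+1)) /=; [|lia|lia].
  rewrite !sum1 xp xl.
  have -> : l.+1 + (P - l.+1) = P by lia.
  have -> : l + P = k.+1 by lia.
  rewrite /wt /=; lia.
- rewrite !(wt_cons, wt_cat) wt_zp; last lia.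
  rewrite wt_map_iota /=.
  rewrite (big_cat_nat (m := 1) (n := P) (p := k.+1)) /=; [|lia|lia].
  rewrite (big_cat_nat (m := P) (n := P.+1) (p := k.+1)) /=; [|lia|lia].
  rewrite (big_cat_nat (m := P.+1) (n := P + P) (p := k.+1)) /=; [|lia|lia].
  rewrite !sum1 xp.
  have -> : P + P + (k.+1 - (P + P)) = k.+1 by lia.
  rewrite /wt /=; lia.
Qed.

Lemma frob_ge H h : h \in H -> h <= frob H.
Proof. by move=> Hh; rewrite /frob; apply: (leq_bigmax_seq (F := fun i => i)). Qed.

Lemma frob_in H : H != [::] -> frob H \in H.
Proof.
rewrite /frob; elim: H => [|a s IH] // _.
rewrite big_cons; case: s IH => [|b s] IH.
  by rewrite big_nil maxn0 inE.
have := IH isT; set y := \max_(i <- _) i => Hy.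
case: (leqP a y) => ay.
  by rewrite inE Hy orbT.
by rewrite inE eqxx.
Qed.

Lemma mult_props H : [/\ 0 < mult H, mult H \notin H, mult H <= (frob H).+1 &
  forall i, 0 < i < mult H -> i \in H].
Proof.
rewrite /mult; set s := iota 0 (frob H).+2.
set p := fun n => (0 < n) && (n \notin H).
have hs : has p s.
  apply/hasP; exists (frob H).+1; first by rewrite mem_iota; lia.
  rewrite /p /=; apply/negP => /frob_ge; lia.
have hf := hs; rewrite has_find in hf; rewrite size_iota in hf.
have := nth_find 0 hs; rewrite nth_iota // add0n => /andP [h1 h2].
split=> //.
move=> i /andP [i0 im].
have := before_find 0 im; rewrite nth_iota; last lia.
by rewrite add0n /p i0 /= => /negbFE.
Qed.

Definition pf2 H P := pseudo_frob H P && ~~ ((frob H + 1 - mult H <= P) && (P <= frob H)).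
Definition xH H i := mult H + i \notin H.
Definition kH H := frob H - mult H - 1.
Definition enc H P := core (xH H) P (kH H) ++ false :: nseq (2 * mult H - frob H - 1) true.

Lemma pf2_facts H P : is_gapset H -> pf2 H P ->
  [/\ P \in H, 0 < P, mult H + P < frob H & valid (xH H) P (kH H)].
Proof.
case=> srt H0 _ /andP [/andP [PH /allP pf] nt1].
have [m0 mH mF mi] := mult_props H.
have PF := frob_ge PH.
have P0 : 0 < P by case: (posnP P) PH => [->|//]; rewrite (negbTE H0).
have Pm : P + mult H <= frob H by lia.
have pfs : forall s, 1 <= s <= frob H -> (s \in H) || (P + s \notin H).
  by move=> s hs; apply: pf; rewrite mem_iota; lia.
have FH : frob H \in H by apply: frob_in; case: (H) PH.
have PmH : mult H + P \notin H.
  by have := pfs (mult H); rewrite (negbTE mH) addnC /=; apply; lia.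
have PmF : mult H + P < frob H.
  rewrite ltn_neqAle; apply/andP; split; last lia.
  by apply/eqP => E; move: PmH; rewrite E FH.
split=> //; split=> //.
- rewrite /kH; lia.
- rewrite /xH /kH.
  have -> : mult H + ((frob H - mult H - 1).+1 - P) = frob H - P by lia.
  have := pfs (frob H - P); rewrite subnKC; last lia.
  by rewrite FH orbF => -> //; lia.
- move=> b b1 bk; rewrite /xH /kH in bk * => h2.
  have : (mult H + b \in H) || (P + (mult H + b) \notin H) by apply: pfs; lia.
  have -> : mult H + (b + P) = P + (mult H + b) by lia.
  by rewrite (negbTE h2).
Qed.

Lemma gap_uniq H : is_gapset H -> uniq H.
Proof. by case=> srt _ _; apply: (sorted_uniq ltn_trans ltnn). Qed.

Lemma size_count H : is_gapset H -> size H = count (mem H) (iota 1 (frob H)).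
Proof.
move=> G; have U := gap_uniq G; case: G => _ H0 _.
rewrite -size_filter; apply/eqP; rewrite eqn_leq; apply/andP; split.
- apply: uniq_leq_size U _ => h hH; rewrite mem_filter; apply/andP; split=> //.
  rewrite mem_iota.
  have := frob_ge hH; case: (posnP h) hH => [->|]; first by rewrite (negbTE H0).
  lia.
- apply: uniq_leq_size; first by apply: filter_uniq; apply: iota_uniq.
  by move=> h; rewrite mem_filter => /andP [].
Qed.

Lemma genus_formula H P : is_gapset H -> pf2 H P ->
  size H = mult H + count (fun i => mult H + i \in H) (iota 1 (kH H)).
Proof.
move=> G pf; have [PH P0 PmF V] := pf2_facts G pf.
have [m0 mH mF mi] := mult_props H.
have FH : frob H \in H by apply: frob_in; case: (H) PH.
rewrite size_count //.
have eF : frob H = (mult H).-1 + (1 + (kH H + 1)) by rewrite /kH; lia.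
rewrite eF !iotaD !count_cat.
have -> : 1 + (mult H).-1 = mult H by lia.
rewrite (@eq_in_count _ _ predT); last first.
  by move=> i; rewrite mem_iota => hi; apply: mi; lia.
rewrite count_predT size_iota.
have -> : mult H + 1 + kH H = frob H by rewrite /kH; lia.
have c1 : count (mem H) (iota (mult H) 1) = 0 by rewrite /= (negbTE mH).
have c2 : count (mem H) (iota (frob H) 1) = 1 by rewrite /= FH.
rewrite c1 c2 addnC iotaDl count_map.
have -> : count (preim (addn (mult H)) (mem H)) (iota 1 (kH H)) =
  count (fun i => mult H + i \in H) (iota 1 (kH H)) by [].
lia.
Qed.

Lemma count_negb_nseq c : count negb (nseq c true) = 0.
Proof. by elim: c. Qed.

Lemma wt_enc g H P : in_B g H -> pf2 H P -> wt (enc H P) = g + 3.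
Proof.
case=> G Hg HB pf; rewrite -Hg /genus; have [PH P0 PmF V] := pf2_facts G pf.
have F2 : frob H < 2 * mult H by case: HB => // E; rewrite E in PH.
rewrite (genus_formula G pf) /enc wt_cat wt_core // wt_cons /wt size_nseq count_negb_nseq.
have -> : \sum_(1 <= i < (kH H).+1) wx (xH H i) = wt [seq xH H i | i <- iota 1 (kH H)].
  by rewrite wt_map_iota add1n.
rewrite /wt size_map size_iota count_map.
rewrite (@eq_count _ _ (fun i => mult H + i \in H)); last by move=> i; rewrite /= /xH negbK.
rewrite /kH /=; lia.
Qed.

Lemma rev_dec a1 a2 c1 c2 : a1 ++ false :: nseq c1 true = a2 ++ false :: nseq c2 true ->
  a1 = a2 /\ c1 = c2.
Proof.
move/(congr1 rev); rewrite !rev_cat !rev_cons !rev_nseq !cat_rcons.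
elim: c1 c2 => [|c1 IH] [|c2] //=.
- by move=> [] /(congr1 rev); rewrite !revK.
- by move=> [] /IH [-> ->].
Qed.

Lemma enc_inj g H1 H2 P1 P2 : in_B g H1 -> in_B g H2 -> pf2 H1 P1 -> pf2 H2 P2 ->
  enc H1 P1 = enc H2 P2 -> H1 = H2 /\ P1 = P2.
Proof.
move=> B1 B2 q1 q2.
case: B1 => G1 _ HB1; case: B2 => G2 _ HB2.
have [PH1 P01 PmF1 V1] := pf2_facts G1 q1.
have [PH2 P02 PmF2 V2] := pf2_facts G2 q2.
have F21 : frob H1 < 2 * mult H1 by case: HB1 => // E; rewrite E in PH1.
have F22 : frob H2 < 2 * mult H2 by case: HB2 => // E; rewrite E in PH2.
have [m01 mH1 mF1 mi1] := mult_props H1.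
have [m02 mH2 mF2 mi2] := mult_props H2.
have FH1 : frob H1 \in H1 by apply: frob_in; case: (H1) PH1.
have FH2 : frob H2 \in H2 by apply: frob_in; case: (H2) PH2.
rewrite /enc => /rev_dec [/(core_inj V1 V2) [eP ek ex] ec].
rewrite /kH in ek ex.
have em : mult H1 = mult H2 by lia.
have eF : frob H1 = frob H2 by lia.
split=> //.
case: G1 => srt1 H01 _; case: G2 => srt2 H02 _.
apply: (irr_sorted_eq ltn_trans ltnn) srt1 srt2 _ => i.
have [i0|i0] := posnP i; first by subst i; rewrite (negbTE H01) (negbTE H02).
have [im|im] := ltnP i (mult H1).
  have h1 : 0 < i < mult H1 by rewrite i0 im.
  have h2 : 0 < i < mult H2 by rewrite i0 -em im.
  by rewrite (mi1 _ h1) (mi2 _ h2).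
have [ie|ie] := eqVneq i (mult H1).
  by rewrite ie (negbTE mH1) em (negbTE mH2).
have [iF|iF] := ltnP i (frob H1).
  have hb : 0 < i - mult H1 <= frob H1 - mult H1 - 1 by move: im ie iF; clear; lia.
  have := ex _ hb; rewrite /xH.
  have e1 : mult H1 + (i - mult H1) = i by move: im; clear; lia.
  rewrite e1 -em e1.
  by move=> h; apply: negb_inj.
have [ie2|ie2] := eqVneq i (frob H1).
  by rewrite ie2 FH1 eF FH2.
have nin : forall H, i > frob H -> i \notin H.
  by move=> H hi; apply/negP => /frob_ge; move: hi; clear; lia.
have g1 : i > frob H1 by move: iF ie2; clear; lia.
have g2 : i > frob H2 by rewrite -eF.
by rewrite (negbTE (nin H1 g1)) (negbTE (nin H2 g2)).
Qed.

Lemma count_sub (T : Type) (a b : pred T) s :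
  count a s - count b s <= count (fun x => a x && ~~ b x) s.
Proof. elim: s => //= x s IH; case: (a x); case: (b x) => /=; lia. Qed.

Lemma t2_le H : t2 H <= count (pf2 H) H.
Proof. exact: count_sub. Qed.

Definition W (L : seq (seq nat)) :=
  flatten [seq [seq enc H P | P <- filter (pf2 H) H] | H <- L].

Lemma size_W L : size (W L) = \sum_(H <- L) count (pf2 H) H.
Proof.
elim: L => [|H L IH]; first by rewrite big_nil.
by rewrite big_cons /W /= size_cat size_map size_filter -IH.
Qed.

Lemma sum_t2 L : \sum_(H <- L) t2 H <= \sum_(H <- L) count (pf2 H) H.
Proof.
elim: L => [|H L IH]; first by rewrite !big_nil.
by rewrite !big_cons leq_add // t2_le.
Qed.

Lemma W_uniq g L : uniq L -> (forall H, H \in L -> in_B g H) -> uniq (W L).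
Proof.
elim: L => [|H L IH] //= /andP [HnL UL] hB.
rewrite cat_uniq; apply/and3P; split.
- have GH : is_gapset H by case: (hB H (mem_head _ _)).
  rewrite map_inj_in_uniq; first by apply: filter_uniq; apply: gap_uniq.
  move=> P1 P2; rewrite !mem_filter => /andP [q1 _] /andP [q2 _] E.
  by have [_ ->] := enc_inj (hB H (mem_head _ _)) (hB H (mem_head _ _)) q1 q2 E.
- apply/hasPn => w /flattenP [A' /mapP [H' H'L ->] /mapP [P' ]].
  rewrite mem_filter => /andP [q' _] -> /=.
  apply/negP => /mapP [P]; rewrite mem_filter => /andP [q _] E.
  have H'in : H' \in H :: L by rewrite inE H'L orbT.
  have [E1 _] := enc_inj (hB H' H'in) (hB H (mem_head _ _)) q' q E.
  by move: HnL; rewrite -E1 H'L.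
- apply: IH => // H' h; apply: hB; by rewrite inE h orbT.
Qed.

Lemma W_sub g L : (forall H, H \in L -> in_B g H) -> {subset W L <= words (g + 3)}.
Proof.
move=> hB w /flattenP [A' /mapP [H' H'L ->] /mapP [P']].
rewrite mem_filter => /andP [q' _] ->.
by rewrite -(wt_enc (hB H' H'L) q'); apply: words_complete.
Qed.

Theorem lemma5p1 (g : nat) (L : seq (seq nat)) :
  uniq L -> (forall H, H \in L -> in_B g H) ->
  \sum_(H <- L) t2 H <= fib (g + 4).
Proof.
move=> UL hB.
apply: (leq_trans (sum_t2 L)); rewrite -size_W.
have -> : g + 4 = (g + 3).+1 by lia.
rewrite -size_words.
apply: uniq_leq_size; [exact: W_uniq hB | exact: W_sub].
Qed.
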